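(* With the notation of the context, let $0\le\lambda_{k-1}<\lambda_k\le1$, and let $x$ solve $\frac{dx}{d\lambda}=A(\lambda)x+b(\lambda)$ on $[\lambda_{k-1},\lambda_k]$. Set $s_{i,k}=\sqrt{1+\lambda_k\alpha_i}$, $s_{i,k-1}=\sqrt{1+\lambda_{k-1}\alpha_i}$. Then $$x(\lambda_k)=\big(I+E\,\Omega_k F^\top\big)x(\lambda_{k-1})+E\,c_k,$$ where $\Omega_k=\mathrm{diag}(\Omega_{ii,k})$ with $\Omega_{ii,k}=\dfrac{s_{i,k-1}/s_{i,k}-1}{\alpha_i}$, and $c_k\in\mathbb{R}^{n_z}$ has entries $$c_{i,k}=\frac{\alpha_i\tilde z_i\,(\lambda_k s_{i,k-1}-\lambda_{k-1}s_{i,k})+\tilde x_i\,(s_{i,k-1}-s_{i,k})}{\alpha_i\,s_{i,k}^2\,s_{i,k-1}}.$$ In particular $I+E\Omega_kF^\top=\exp\!\big(\int_{\lambda_{k-1}}^{\lambda_k}A(\mu)\,d\mu\big)$.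
   Context: $P\in\mathbb{R}^{n_x\times n_x}$, $R\in\mathbb{R}^{n_z\times n_z}$ symmetric positive definite, $H\in\mathbb{R}^{n_z\times n_x}$ of full row rank (held fixed over the interval), $\bar x\in\mathbb{R}^{n_x}$, $z\in\mathbb{R}^{n_z}$. $R^{-1/2}$ is the inverse of the symmetric positive definite square root of $R$. $A(\lambda)=-\tfrac12 PH^\top(\lambda HPH^\top+R)^{-1}H$, $b(\lambda)=(I+2\lambda A(\lambda))\big[(I+\lambda A(\lambda))PH^\top R^{-1}z+A(\lambda)\bar x\big]$. Let $D=R^{-1/2}HPH^\top R^{-1/2}=V\Lambda V^\top$ with $V$ orthogonal, $\Lambda=\mathrm{diag}(\alpha_1,\dots,\alpha_{n_z})$, $\alpha_i>0$; $E=PH^\top R^{-1/2}V$, $F^\top=V^\top R^{-1/2}H$, $\tilde z=V^\top R^{-1/2}z$, $\tilde x=F^\top\bar x$. *)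

(* Defs.v *)
From HB Require Import structures.
From mathcomp Require Import all_boot all_order all_algebra.
From mathcomp Require Import all_classical all_reals all_analysis.
Set Implicit Arguments. Unset Strict Implicit. Unset Printing Implicit Defensive.
Import Order.TTheory GRing.Theory Num.Theory.
Import numFieldNormedType.Exports.
Local Open Scope classical_set_scope.
Local Open Scope ring_scope.

Definition spd (R : realType) (n : nat) (M : 'M[R]_n) : Prop :=
  M^T = M /\ forall v : 'cV[R]_n, v != 0 -> 0 < (v^T *m M *m v) 0 0.

Definition Amat (R : realType) (nx nz : nat) (P : 'M[R]_nx) (Rm : 'M[R]_nz)
  (H : 'M[R]_(nz, nx)) (l : R) : 'M[R]_nx :=
  (- (2%:R)^-1) *: (P *m H^T *m invmx (l *: (H *m P *m H^T) + Rm) *m H).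

Definition bvec (R : realType) (nx nz : nat) (P : 'M[R]_nx) (Rm : 'M[R]_nz)
  (H : 'M[R]_(nz, nx)) (xbar : 'cV[R]_nx) (z : 'cV[R]_nz) (l : R) : 'cV[R]_nx :=
  let A := Amat P Rm H l in
  (1%:M + (2 * l) *: A) *m
    ((1%:M + l *: A) *m (P *m H^T *m invmx Rm *m z) + A *m xbar).

Definition mxRintegral (R : realType) (m n : nat) (f : R -> 'M[R]_(m, n)) (a b : R)
  : 'M[R]_(m, n) :=
  \matrix_(i, j) Rintegral lebesgue_measure `[a, b] (fun t => f t i j).

Definition expm (R : realType) (n : nat) (M : 'M[R]_n) : 'M[R]_n :=
  \matrix_(i, j) limn (series (fun k : nat => ((k`!%:R)^-1 *: M ^+ k) i j)).

(* Main.v *)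
Require Import Defs.
From HB Require Import structures.
From mathcomp Require Import all_boot all_order all_algebra.
From mathcomp Require Import all_classical all_reals all_analysis.
From mathcomp Require Import ring lra.
Import Order.TTheory GRing.Theory Num.Theory.
Import numFieldNormedType.Exports.
Local Open Scope classical_set_scope.
Local Open Scope ring_scope.

Set Implicit Arguments. Unset Strict Implicit. Unset Printing Implicit Defensive.


Lemma spd_unit (R : realType) n (M : 'M[R]_n) : spd M -> M \in unitmx.
Proof.
move=> [_ pos]; rewrite unitmxE unitfE; apply/negP => /det0P [v vn0 vM].
have := pos v^T; rewrite trmx_eq0 => /(_ vn0).
by rewrite trmxK vM mul0mx mxE ltxx.
Qed.

Lemma invmx_eq (R : realType) n (A B : 'M[R]_n) : A *m B = 1%:M -> invmx A = B.
Proof.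
move=> AB; have [Au _] := mulmx1_unit AB.
by rewrite -[RHS](mulKmx Au) AB mulmx1.
Qed.

Lemma diag_entry (R : realType) n (d : 'rV[R]_n) (v : 'cV[R]_n) i :
  (diag_mx d *m v) i 0 = d 0 i * v i 0.
Proof. by rewrite mul_diag_mx mxE. Qed.

Lemma diag_add1_entry (R : realType) n (c : R) (d : 'rV[R]_n) (v : 'cV[R]_n) i :
  ((1%:M + c *: diag_mx d) *m v) i 0 = (1 + c * d 0 i) * v i 0.
Proof. by rewrite mulmxDl mul1mx -scalemxAl mul_diag_mx !mxE mulrDl mul1r mulrA. Qed.

Lemma scale_diag (R : realType) n (c : R) (d : 'rV[R]_n) :
  c *: diag_mx d = diag_mx (\row_i (c * d 0 i)).
Proof. by apply/matrixP => i j; rewrite !mxE mulrnAr. Qed.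

Lemma diag_add1 (R : realType) n (c : R) (d : 'rV[R]_n) :
  diag_mx (\row_i (1 + c * d 0 i)) = 1%:M + c *: diag_mx d.
Proof.
apply/matrixP => i j; rewrite !mxE; case: (i =P j) => [->|_].
  by rewrite !mulr1n.
by rewrite !mulr0n mulr0 addr0.
Qed.


Lemma push1 (R : realType) nx nz (E : 'M[R]_(nx,nz)) (Ft : 'M[R]_(nz,nx)) (D L : 'M[R]_nz)
  (c : R) m (K : 'M[R]_(nz, m)) :
  Ft *m E = L ->
  (1%:M + c *: (E *m D *m Ft)) *m (E *m K) = E *m ((1%:M + c *: (D *m L)) *m K).
Proof.
move=> FE.
rewrite mulmxDl mul1mx mulmxDl mul1mx mulmxDr -!scalemxAl -!scalemxAr.
by rewrite !mulmxA -(mulmxA (E *m D)) FE.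
Qed.

Lemma rhs_form (R : realType) nx nz (E : 'M[R]_(nx,nz)) (Ft : 'M[R]_(nz,nx)) (D L : 'M[R]_nz)
  (zt xt : 'cV[R]_nz) (X xbar : 'cV[R]_nx) (t : R) :
  Ft *m E = L -> Ft *m xbar = xt ->
  (E *m D *m Ft) *m X + (1%:M + (2 * t) *: (E *m D *m Ft)) *m
     ((1%:M + t *: (E *m D *m Ft)) *m (E *m zt) + (E *m D *m Ft) *m xbar) =
  E *m (D *m (Ft *m X) + (1%:M + (2*t) *: (D *m L)) *m
        ((1%:M + t *: (D *m L)) *m zt + D *m xt)).
Proof.
move=> FE Fx.
rewrite (push1 _ _ _ FE).
have -> : E *m D *m Ft *m xbar = E *m (D *m xt) by rewrite -Fx !mulmxA.
rewrite -mulmxDr (push1 _ _ _ FE) mulmxDr.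
by rewrite [in RHS]mulmxDr !mulmxA.
Qed.

Lemma mx_setup (R : realType) nx nz (P : 'M[R]_nx) (Rm : 'M[R]_nz) (H : 'M[R]_(nz, nx))
  (Rhalf V : 'M[R]_nz) (alpha : 'rV[R]_nz) :
  Rhalf \in unitmx -> Rhalf *m Rhalf = Rm -> V^T *m V = 1%:M ->
  invmx Rhalf *m H *m P *m H^T *m invmx Rhalf = V *m diag_mx alpha *m V^T ->
  (V^T *m invmx Rhalf *m H) *m (P *m H^T *m invmx Rhalf *m V) = diag_mx alpha /\
  (forall t, (forall i, 1 + t * alpha 0 i != 0) ->
     Amat P Rm H t = (P *m H^T *m invmx Rhalf *m V)
        *m diag_mx (\row_i (-(2%:R)^-1 * (1 + t * alpha 0 i)^-1))
        *m (V^T *m invmx Rhalf *m H)) /\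
  P *m H^T *m invmx Rm = (P *m H^T *m invmx Rhalf *m V) *m V^T *m invmx Rhalf.
Proof.
move=> Ru RR VtV hD.
have VVt : V *m V^T = 1%:M by apply: mulmx1C.
set Rih := invmx Rhalf.
have R1 : Rhalf *m Rih = 1%:M by apply: mulmxV.
have R2 : Rih *m Rhalf = 1%:M by apply: mulVmx.
split.
  have -> : V^T *m Rih *m H *m (P *m H^T *m Rih *m V) =
     V^T *m (Rih *m H *m P *m H^T *m Rih) *m V by rewrite !mulmxA.
  by rewrite hD !mulmxA VtV mul1mx -mulmxA VtV mulmx1.
split; last first.
  have -> : invmx Rm = Rih *m Rih.
    by apply: invmx_eq; rewrite -RR -mulmxA (mulmxA Rhalf Rih) R1 mul1mx R1.
  by rewrite -!mulmxA (mulmxA V) VVt mul1mx.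
move=> t ht.
have HPH : H *m P *m H^T = Rhalf *m V *m diag_mx alpha *m V^T *m Rhalf.
  have -> : Rhalf *m V *m diag_mx alpha *m V^T *m Rhalf =
     Rhalf *m (V *m diag_mx alpha *m V^T) *m Rhalf by rewrite !mulmxA.
  by rewrite -hD !mulmxA R1 mul1mx -!mulmxA R2 mulmx1.
pose Dg := diag_mx (\row_i (1 + t * alpha 0 i)).
pose Dgi := diag_mx (\row_i (1 + t * alpha 0 i)^-1).
have MM : t *: (H *m P *m H^T) + Rm = Rhalf *m V *m Dg *m V^T *m Rhalf.
  rewrite /Dg diag_add1 HPH -RR.
  rewrite mulmxDr mulmx1 -scalemxAr !mulmxDl -!scalemxAl addrC.
  by rewrite -(mulmxA Rhalf V V^T) VVt mulmx1.
have DD : Dg *m Dgi = 1%:M.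
  rewrite /Dg /Dgi mulmx_diag -diag_const_mx; congr diag_mx.
  by apply/matrixP => i j; rewrite !mxE mulfV.
have inv : invmx (t *: (H *m P *m H^T) + Rm) = Rih *m V *m Dgi *m V^T *m Rih.
  apply: invmx_eq; rewrite MM.
  rewrite -!mulmxA (mulmxA Rhalf Rih) R1 mul1mx (mulmxA V^T V) VtV mul1mx.
  by rewrite (mulmxA Dg) DD mul1mx (mulmxA V) VVt mul1mx R1.
rewrite /Amat inv.
have -> : diag_mx (\row_i (-(2%:R)^-1 * (1 + t * alpha 0 i)^-1)) = -(2%:R)^-1 *: Dgi.
  by rewrite /Dgi scale_diag; congr diag_mx; apply/matrixP => i j; rewrite !mxE.
by rewrite -scalemxAr -scalemxAl !mulmxA.
Qed.


Section Calc.
Variable R : realType.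
Implicit Types (f g : R -> R) (t c df dg : R).

Lemma derC c t : is_derive t 1 (fun _ : R => c) 0.
Proof. exact: is_derive_cst. Qed.

Lemma derId t : is_derive t 1 (fun x : R => x) 1.
Proof. exact: is_derive_id. Qed.

Lemma derD f g t df dg : is_derive t 1 f df -> is_derive t 1 g dg ->
  is_derive t 1 (fun x => f x + g x) (df + dg).
Proof. by move=> hf hg; exact: is_deriveD. Qed.

Lemma derB f g t df dg : is_derive t 1 f df -> is_derive t 1 g dg ->
  is_derive t 1 (fun x => f x - g x) (df - dg).
Proof. by move=> hf hg; exact: is_deriveB. Qed.

Lemma derM f g t df dg : is_derive t 1 f df -> is_derive t 1 g dg ->
  is_derive t 1 (fun x => f x * g x) (f t * dg + g t * df).
Proof. by move=> hf hg; exact: is_deriveM. Qed.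

Lemma derV f t df : f t != 0 -> is_derive t 1 f df ->
  is_derive t 1 (fun x => (f x)^-1) (- (f t) ^- 2 * df).
Proof. by move=> hf0 hf; exact: is_deriveV. Qed.

Lemma derE f t df df' : is_derive t 1 f df -> df = df' -> is_derive t 1 f df'.
Proof. by move=> h <-. Qed.

Lemma derSq (a t : R) : 0 < 1 + t * a ->
  is_derive t 1 (fun x => Num.sqrt (1 + x * a)) (a / (2 * Num.sqrt (1 + t * a))).
Proof.
move=> h.
have h1 : is_derive t 1 (fun x => 1 + x * a) a.
  have := derD (derC 1 t) (derM (derId t) (derC a t)).
  by rewrite mulr0 mulr1 !add0r.
have := @is_derive1_comp R Num.sqrt (fun x => 1 + x * a) t _ a (is_derive1_sqrt h) h1.
by rewrite mulrC.
Qed.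

Lemma const_der0 (f : R -> R) (a b : R) : a < b ->
  (forall x, x \in `]a, b[ -> is_derive x 1 f 0) ->
  {within `[a, b], continuous f} -> f b = f a.
Proof.
move=> ab hd hc; have [c _ ] := MVT ab hd hc.
by rewrite mul0r => /eqP; rewrite subr_eq0 => /eqP.
Qed.

Lemma cont_sum (T : topologicalType) n (F : 'I_n -> T -> R) :
  (forall k, continuous (F k)) -> continuous (fun x => \sum_k F k x).
Proof.
move=> hF.
have -> : (fun x => \sum_k F k x) = \sum_k F k.
  by apply/funext => x; rewrite fct_sumE.
elim/big_ind: _ => //; first exact: cst_continuous.
by move=> f g hf hg x; apply: continuousD; [exact: hf | exact: hg].
Qed.

End Calc.


Section W.
Variable R : realType.

Definition sq (a t : R) := Num.sqrt (1 + t * a).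
Definition mm (a t : R) := - (2%:R)^-1 * (1 + t * a)^-1.
Definition gf (a t y Z X : R) :=
  mm a t * y + (1 + 2 * t * (mm a t * a)) * ((1 + t * (mm a t * a)) * Z + mm a t * X).
Definition wf (a l0 y0 Z X t : R) :=
  (Z - y0) / a + (sq a l0 * y0 / a - Z * l0 / sq a l0 - X / (a * sq a l0)) * (sq a t)^-1
  + (X - Z) / a * ((sq a t)^-1 * (sq a t)^-1).

Lemma sq_gt0 (a t : R) : 0 < 1 + t * a -> 0 < sq a t.
Proof. by move=> h; rewrite /sq sqrtr_gt0. Qed.

Lemma sq_sqr (a t : R) : 0 < 1 + t * a -> sq a t ^+ 2 = 1 + t * a.
Proof. by move=> h; rewrite /sq sqr_sqrtr // ltW. Qed.

Lemma derR (a t : R) : 0 < 1 + t * a ->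
  is_derive t 1 (fun x => (sq a x)^-1) (- (sq a t) ^- 2 * (a / (2 * sq a t))).
Proof.
move=> h; apply: derV; first by rewrite gt_eqF // sq_gt0.
exact: derSq.
Qed.

Lemma wf_der (a l0 y0 Z X t : R) : 0 < a -> 0 < 1 + t * a -> 0 < 1 + l0 * a ->
  is_derive t 1 (wf a l0 y0 Z X) (gf a t (y0 + a * wf a l0 y0 Z X t) Z X).
Proof.
move=> a0 ht hl.
have dr := derR ht.
have := derD (derD (derC ((Z - y0) / a) t) (derM (derC (sq a l0 * y0 / a - Z * l0 / sq a l0 - X / (a * sq a l0)) t) dr))
   (derM (derC ((X - Z) / a) t) (derM dr dr)).
move=> H; eapply derE; [exact: H|].
have S0 := sq_gt0 ht; have s00 := sq_gt0 hl.
have hS := sq_sqr ht.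
rewrite /gf /mm /wf -hS.
move: S0 hS; set S := sq a t; move: (sq a l0) s00 => s0 s00.
clearbody S => S0 hS.
have -> : t = (S ^+ 2 - 1) / a by rewrite hS addrC addKr mulfK // gt_eqF.
field.
by rewrite !gt_eqF.
Qed.

End W.

Section Y.
Variable R : realType.

Lemma pos1 (a l0 u : R) : 0 < a -> 0 <= l0 -> l0 <= u -> 0 < 1 + u * a.
Proof.
move=> a0 l00 lu; have h : 0 <= u * a := mulr_ge0 (le_trans l00 lu) (ltW a0).
lra.
Qed.

Lemma wf_l0 (a l0 y0 Z X : R) : 0 < a -> 0 < 1 + l0 * a -> wf a l0 y0 Z X l0 = 0.
Proof.
move=> a0 hl; have s00 := sq_gt0 hl; have hs := sq_sqr hl.
rewrite /wf; move: s00 hs; move: (sq a l0) => s0 s00 hs.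
have -> : l0 = (s0 ^+ 2 - 1) / a by rewrite hs addrC addKr mulfK // gt_eqF.
field; by rewrite !gt_eqF.
Qed.

Lemma within_sq (a l0 l1 : R) : 0 < a -> 0 <= l0 ->
  {within `[l0, l1], continuous (sq a)}.
Proof.
move=> a0 l00; apply: derivable_within_continuous => u.
rewrite in_itv /= => /andP [hu _].
have hu' : 0 < 1 + u * a by exact: pos1 hu.
by have := derSq hu' => -[].
Qed.

Lemma within_wf (a l0 l1 y0 Z X : R) : 0 < a -> 0 <= l0 ->
  {within `[l0, l1], continuous (wf a l0 y0 Z X)}.
Proof.
move=> a0 l00; apply: derivable_within_continuous => u.
rewrite in_itv /= => /andP [hu _].
have hu' : 0 < 1 + u * a by exact: pos1 hu.
have hl : 0 < 1 + l0 * a by exact: pos1 (lexx _).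
by have := wf_der y0 Z X a0 hu' hl => -[].
Qed.

Lemma y_eq (a l0 l1 y0 Z X : R) (y : R -> R) : 0 < a -> 0 <= l0 -> l0 < l1 ->
  {within `[l0, l1], continuous y} ->
  (forall t, l0 < t < l1 -> is_derive t 1 y (a * gf a t (y t) Z X)) ->
  y l0 = y0 ->
  forall t, l0 < t < l1 -> y t = y0 + a * wf a l0 y0 Z X t.
Proof.
move=> a0 l00 l01 yc yd y0E t /andP [lt tl].
have pos u : l0 <= u -> 0 < 1 + u * a by exact: pos1.
pose phi u := sq a u * (y u - (y0 + a * wf a l0 y0 Z X u)).
have cphi : {within `[l0, l1], continuous phi}.
  move=> u; apply: continuousM; first exact: within_sq.
  apply: continuousB; first exact: yc.
  apply: continuousD; first exact: cst_continuous.
  apply: continuousM; first exact: cst_continuous.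
  exact: within_wf.
have : phi t = phi l0.
  apply: const_der0 => //; last first.
    apply: continuous_subspaceW cphi => u /=; rewrite !in_itv /= => /andP [-> ut] /=.
    exact: le_trans ut (ltW tl).
  move=> u; rewrite in_itv /= => /andP [lu ut].
  have hu := pos u (ltW lu).
  have hl := pos l0 (lexx _).
  have := derM (derSq hu) (derB (yd u _) (derD (derC y0 u) (derM (derC a u) (wf_der y0 Z X a0 hu hl)))).
  move=> /(_ _) H; have {}H := H ltac:(by rewrite lu (lt_trans ut tl)).
  eapply derE; [exact: H|].
  have S0 := sq_gt0 hu; have hS := sq_sqr hu; rewrite /sq in S0 hS.
  rewrite /gf /mm; set S := Num.sqrt (1 + u * a) in S0 hS *.
  rewrite -hS.
  field; by rewrite !gt_eqF.
rewrite /phi y0E wf_l0 // ?(pos l0 (lexx _)) // mulr0 addr0 subrr mulr0.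
move/eqP; rewrite mulf_eq0 gt_eqF ?sq_gt0 ?(pos t (ltW lt)) //= subr_eq0.
by move/eqP.
Qed.

End Y.


Section I.
Variable R : realType.

Lemma derLnSq (a u : R) : 0 < a -> 0 < 1 + u * a ->
  is_derive u 1 (fun x => - ln (sq a x) / a) (mm a u).
Proof.
move=> ap h.
have S0 := sq_gt0 h; have hS := sq_sqr h.
have h1 := is_derive1_comp (is_derive1_ln S0) (derSq h).
have -> : (fun x => - ln (sq a x) / a) =
   (fun x => (- a^-1) * (@ln R \o sq a) x).
  by apply/funext => x /=; rewrite /sq mulrC mulNr mulrN.
eapply derE; first exact: (derM (derC (- a^-1) u) h1).
rewrite /mm /sq /= mulr0 addr0; rewrite /sq in S0 hS.
set S := Num.sqrt (1 + u * a) in S0 hS *; rewrite -hS.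
field; rewrite !gt_eqF //.
Qed.

Lemma der_mm (a u : R) : 0 < 1 + u * a -> derivable (mm a) u 1.
Proof.
move=> h.
have := derM (derC (- (2%:R)^-1) u) (derV _ (derD (derC 1 u) (derM (derId u) (derC a u)))).
move=> /(_ (lt0r_neq0 h)) [].
by [].
Qed.

Lemma integ_mm (a l0 l1 : R) : 0 < a -> 0 <= l0 -> l0 < l1 ->
  Rintegral lebesgue_measure `[l0, l1] (mm a) = (ln (sq a l0) - ln (sq a l1)) / a.
Proof.
move=> a0 l00 l01.
pose F x := - ln (sq a x) / a.
have dF u : l0 <= u -> is_derive u 1 F (mm a u).
  by move=> hu; apply: derLnSq => //; exact: pos1 hu.
rewrite /Rintegral (@continuous_FTC2 _ _ F).
- by rewrite -EFinB /= /F; field; rewrite gt_eqF.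
- exact: l01.
- apply: derivable_within_continuous => u; rewrite in_itv /= => /andP [hu _].
  exact: der_mm (pos1 a0 l00 hu).
- split.
  + move=> u; rewrite in_itv /= => /andP [hu _].
    by have [] := dF u (ltW hu).
  + apply: cvg_at_right_filter.
    apply: differentiable_continuous; rewrite -derivable1_diffP.
    by have [] := dF l0 (lexx _).
  + apply: cvg_at_left_filter.
    apply: differentiable_continuous; rewrite -derivable1_diffP.
    by have [] := dF l1 (ltW l01).
- move=> u; rewrite in_itv /= => /andP [hu _].
  by rewrite derive1E; apply: derive_val; exact: dF (ltW hu).
Qed.

End I.

Section I2.
Variable R : realType.

Lemma exp_beta (a l0 l1 : R) : 0 < a -> 0 <= l0 -> l0 <= l1 ->
  expR (a * ((ln (sq a l0) - ln (sq a l1)) / a)) = sq a l0 / sq a l1.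
Proof.
move=> a0 l00 l01.
rewrite mulrC mulfVK ?gt_eqF // expRB !lnK // posrE sq_gt0 //.
  exact: pos1 l01.
exact: pos1 (lexx _).
Qed.

Lemma Rint_sum (I : Type) (a b : R) (s : seq I) (f : I -> R -> R) : a <= b ->
  (forall k, {within `[a, b], continuous (f k)}) ->
  Rintegral lebesgue_measure `[a, b] (fun t => \sum_(k <- s) f k t) =
  \sum_(k <- s) Rintegral lebesgue_measure `[a, b] (f k).
Proof.
move=> ab hc; elim: s => [|k s IH].
  under eq_Rintegral do rewrite big_nil.
  by rewrite big_nil Rintegral_cst // mul0r.
under eq_Rintegral do rewrite big_cons.
rewrite big_cons RintegralD //.
- by rewrite IH.
- by apply: continuous_compact_integrable; [exact: segment_compact | exact: hc].
- apply: continuous_compact_integrable; first exact: segment_compact.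
  have -> : (fun t => \sum_(j <- s) f j t) = \sum_(j <- s) f j.
    by apply/funext => x; rewrite fct_sumE.
  elim/big_ind: _ => //; first exact: cst_continuous.
  by move=> g h hg hh x; apply: continuousD; [exact: hg | exact: hh].
Qed.

Lemma RintZZ (a b c1 c2 : R) (f : R -> R) : {within `[a, b], continuous f} ->
  Rintegral lebesgue_measure `[a, b] (fun t => c1 * f t * c2) =
  c1 * Rintegral lebesgue_measure `[a, b] f * c2.
Proof.
move=> hc.
have i1 := continuous_compact_integrable (@segment_compact _ a b) hc.
rewrite RintegralZr //; last first.
  apply: continuous_compact_integrable; first exact: segment_compact.
  move=> x; apply: continuousM; [exact: cst_continuous | exact: hc].
by rewrite RintegralZl.
Qed.

End I2.


Section X.
Variable R : realType.

Lemma EDF_entry nx nz (E : 'M[R]_(nx,nz)) (Ft : 'M[R]_(nz,nx)) (d : 'rV[R]_nz) i j :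
  (E *m diag_mx d *m Ft) i j = \sum_l E i l * d 0 l * Ft l j.
Proof. by rewrite mxE; apply: eq_bigr => l _; rewrite mul_mx_diag mxE. Qed.

Lemma EDF_pow nx nz (E : 'M[R]_(nx,nz)) (Ft : 'M[R]_(nz,nx)) (alpha beta : 'rV[R]_nz) k :
  Ft *m E = diag_mx alpha ->
  (E *m diag_mx beta *m Ft) ^+ k.+1 =
  E *m diag_mx (\row_l (beta 0 l * (alpha 0 l * beta 0 l) ^+ k)) *m Ft.
Proof.
move=> FE; elim: k => [|k IH].
  rewrite expr1; congr (_ *m _ *m _); congr diag_mx.
  by apply/matrixP => i l; rewrite !mxE ?ord1 expr0 mulr1.
rewrite exprSr IH -[_ * _]/(_ *m _).
rewrite -!mulmxA (mulmxA Ft) FE !mulmxA -(mulmxA E) mulmx_diag -(mulmxA E) mulmx_diag.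
congr (_ *m _ *m _); congr diag_mx; apply/matrixP => i l; rewrite !mxE exprSr.
ring.
Qed.

Lemma expm_EDF nx nz (E : 'M[R]_(nx,nz)) (Ft : 'M[R]_(nz,nx)) (alpha beta : 'rV[R]_nz) :
  Ft *m E = diag_mx alpha -> (forall l, alpha 0 l != 0) ->
  expm (E *m diag_mx beta *m Ft) =
  1%:M + E *m diag_mx (\row_l ((expR (alpha 0 l * beta 0 l) - 1) / alpha 0 l)) *m Ft.
Proof.
move=> FE a0; apply/matrixP => i j.
rewrite /expm mxE [in RHS]mxE EDF_entry.
set u := fun k : nat => _.
pose c l := E i l * Ft l j / alpha 0 l.
pose eb l := alpha 0 l * beta 0 l.
have hs n : series u n.+1 =
   (1%:M : 'M[R]_nx) i j + \sum_l c l * (series (exp_coeff (eb l)) n.+1 - 1).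
  rewrite /series /= big_nat_recl // /u /= fact0 invr1 scale1r expr0.
  congr (_ + _).
  have -> : \sum_l c l * (\sum_(0 <= k < n.+1) exp_coeff (eb l) k - 1) =
       \sum_l c l * (\sum_(0 <= k < n) exp_coeff (eb l) k.+1).
    apply: eq_bigr => l _; rewrite big_nat_recl // /exp_coeff /= expr0 fact0 divr1.
    by rewrite addrC addKr.
  rewrite [RHS](eq_bigr (fun l => \sum_(0 <= k < n) c l * exp_coeff (eb l) k.+1)); last by move=> l _; rewrite mulr_sumr.
  rewrite exchange_big /=; apply: eq_bigr => k _.
  rewrite mxE (EDF_pow _ _ FE) EDF_entry mulr_sumr; apply: eq_bigr => l _.
  rewrite /c /eb /exp_coeff /= !mxE exprS.
  field; by rewrite a0 /= pnatr_eq0 -lt0n fact_gt0.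
apply: cvg_lim => //.
rewrite -cvg_shiftS.
have -> : [sequence series u n.+1]_n = fun n =>
   (1%:M : 'M[R]_nx) i j + \sum_l c l * (series (exp_coeff (eb l)) n.+1 - 1).
  by apply/funext => n; exact: hs.
have hr : \sum_l E i l * (\row_l0 ((expR (alpha 0 l0 * beta 0 l0) - 1) / alpha 0 l0)) 0 l * Ft l j =
    \sum_l c l * (expR (eb l) - 1).
  apply: eq_bigr => l _; rewrite mxE /c /eb; field; exact: a0.
rewrite hr.
apply: cvgD; first exact: cvg_cst.
apply: cvg_big => //.
  exact: add_continuous.
move=> l _; apply: cvgMl_tmp; apply: cvgB; last exact: cvg_cst.
rewrite cvg_shiftS.
exact: is_cvg_series_exp_coeff.
Qed.

End X.


Lemma wf_l1 (R : realType) (a l0 l1 y0 Z X : R) : 0 < a -> 0 < 1 + l0 * a -> 0 < 1 + l1 * a ->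
  wf a l0 y0 Z X l1 = (sq a l0 / sq a l1 - 1) / a * y0 +
    (a * Z * (l1 * sq a l0 - l0 * sq a l1) + X * (sq a l0 - sq a l1)) /
    (a * sq a l1 ^+ 2 * sq a l0).
Proof.
move=> a0 h0 h1; have s00 := sq_gt0 h0; have hs0 := sq_sqr h0.
have s10 := sq_gt0 h1; have hs1 := sq_sqr h1.
rewrite /wf; move: s00 hs0 s10 hs1; move: (sq a l0) (sq a l1) => s0 s1 s00 hs0 s10 hs1.
have -> : l0 = (s0 ^+ 2 - 1) / a by rewrite hs0 addrC addKr mulfK // gt_eqF.
have -> : l1 = (s1 ^+ 2 - 1) / a by rewrite hs1 addrC addKr mulfK // gt_eqF.
field; by rewrite !gt_eqF.
Qed.

Lemma G_entry (R : realType) nz (alpha : 'rV[R]_nz) (t : R) (y zt xt : 'cV[R]_nz) i :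
  let D := diag_mx (\row_i (-(2%:R)^-1 * (1 + t * alpha 0 i)^-1)) in
  (D *m y + (1%:M + (2 * t) *: (D *m diag_mx alpha)) *m
        ((1%:M + t *: (D *m diag_mx alpha)) *m zt + D *m xt)) i 0 =
  gf (alpha 0 i) t (y i 0) (zt i 0) (xt i 0).
Proof.
move=> D; rewrite /D mulmx_diag.
have addE (A B : 'cV[R]_nz) k : (A + B) k 0 = A k 0 + B k 0 by rewrite mxE.
rewrite addE diag_add1_entry addE diag_add1_entry !diag_entry !mxE.
by rewrite /gf /mm.
Qed.

Unset Implicit Arguments.

Theorem mainTheorem4 (R : realType) (nx nz : nat)
  (P : 'M[R]_nx) (Rm : 'M[R]_nz) (H : 'M[R]_(nz, nx))
  (xbar : 'cV[R]_nx) (z : 'cV[R]_nz)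
  (Rhalf : 'M[R]_nz) (V : 'M[R]_nz) (alpha : 'rV[R]_nz)
  (l0 l1 : R) (x : R -> 'cV[R]_nx) :
  spd P -> spd Rm -> \rank H = nz ->
  spd Rhalf -> Rhalf *m Rhalf = Rm ->
  V^T *m V = 1%:M ->
  invmx Rhalf *m H *m P *m H^T *m invmx Rhalf = V *m diag_mx alpha *m V^T ->
  (forall i, 0 < alpha 0 i) ->
  0 <= l0 -> l0 < l1 -> l1 <= 1 ->
  (forall i, {within `[l0, l1], continuous (fun t => x t i 0)}) ->
  (forall t, l0 < t < l1 -> forall i,
     is_derive t 1 (fun s => x s i 0)
       ((Amat P Rm H t *m x t + bvec P Rm H xbar z t) i 0)) ->
  let Rih := invmx Rhalf in
  let E := P *m H^T *m Rih *m V in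
  let Ft := V^T *m Rih *m H in
  let zt := V^T *m Rih *m z in
  let xt := Ft *m xbar in
  let s := fun (l : R) (i : 'I_nz) => Num.sqrt (1 + l * alpha 0 i) in
  let Omega := diag_mx (\row_i ((s l0 i / s l1 i - 1) / alpha 0 i)) in
  let c : 'cV[R]_nz := \col_i
      ((alpha 0 i * zt i 0 * (l1 * s l0 i - l0 * s l1 i)
        + xt i 0 * (s l0 i - s l1 i))
       / (alpha 0 i * s l1 i ^+ 2 * s l0 i)) in
  x l1 = (1%:M + E *m Omega *m Ft) *m x l0 + E *m c
  /\ 1%:M + E *m Omega *m Ft = expm (mxRintegral (Amat P Rm H) l0 l1).
Proof.
move=> _ _ _ Rhspd RR VtV hD apos l00 l01 _ xc xd Rih E Ft zt xt s Omega c.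
have Ru := spd_unit Rhspd.
have [FE' [AmatE' PHR']] := mx_setup Ru RR VtV hD.
have FE : Ft *m E = diag_mx alpha by exact: FE'.
pose D t := diag_mx (\row_i (-(2%:R)^-1 * (1 + t * alpha 0 i)^-1)).
have pos t i : l0 <= t -> 0 < 1 + t * alpha 0 i by move=> h; exact: pos1 h.
have AmatE t : l0 <= t -> Amat P Rm H t = E *m D t *m Ft.
  by move=> h; apply: AmatE' => i; rewrite lt0r_neq0 // pos.
have PHR : P *m H^T *m invmx Rm *m z = E *m zt.
  by rewrite PHR' !mulmxA.
pose G t (y : 'cV[R]_nz) := D t *m y + (1%:M + (2 * t) *: (D t *m diag_mx alpha)) *m
        ((1%:M + t *: (D t *m diag_mx alpha)) *m zt + D t *m xt).
have KEY t X : l0 <= t -> Amat P Rm H t *m X + bvec P Rm H xbar z t = E *m G t (Ft *m X).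
  move=> h; rewrite /bvec /= PHR AmatE //.
  exact: rhs_form.
have Gi t y i : G t y i 0 = gf (alpha 0 i) t (y i 0) (zt i 0) (xt i 0).
  exact: G_entry.
pose y0 := Ft *m x l0.
have Y1 i t : l0 < t < l1 -> (Ft *m x t) i 0 =
    y0 i 0 + alpha 0 i * wf (alpha 0 i) l0 (y0 i 0) (zt i 0) (xt i 0) t.
  have yfE : (fun t => (Ft *m x t) i 0) = \sum_k (fun t => Ft i k * x t k 0).
    by apply/funext => w; rewrite fct_sumE mxE.
  apply: (@y_eq R (alpha 0 i) l0 l1 _ (zt i 0) (xt i 0) (fun t => (Ft *m x t) i 0)) => //.
  - rewrite yfE.
    have -> : \sum_k (fun t => Ft i k * x t k 0) = (fun t => \sum_k Ft i k * x t k 0).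
      by apply/funext => w; rewrite fct_sumE.
    apply: cont_sum => k u; apply: continuousM; [exact: cst_continuous | exact: xc].
  - move=> u hu; rewrite yfE.
    eapply derE; first by apply: is_derive_sum => k; exact: derM (derC _ u) (xd u hu k).
    under eq_bigr do rewrite mulr0 addr0.
    have -> : \sum_k Ft i k * (Amat P Rm H u *m x u + bvec P Rm H xbar z u) k 0 =
       (Ft *m (Amat P Rm H u *m x u + bvec P Rm H xbar z u)) i 0 by rewrite mxE.
    move: hu => /andP [hu _].
    by rewrite KEY ?ltW // mulmxA FE diag_entry Gi.
pose wk k t := wf (alpha 0 k) l0 (y0 k 0) (zt k 0) (xt k 0) t.
have X1 j : x l1 j 0 = x l0 j 0 + \sum_k E j k * wk k l1.
  pose psi t := x t j 0 - \sum_k E j k * wk k t.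
  have psiE : psi = (fun t => x t j 0) - \sum_k (fun t => E j k * wk k t).
    by apply/funext => w; rewrite /psi /= fct_sumE.
  have : psi l1 = psi l0.
    apply: const_der0 => //.
      move=> u; rewrite in_itv /= => hu; rewrite psiE.
      have hu' : l0 <= u by case/andP: hu => /ltW.
      have d1 := xd u hu j.
      have d2 := @is_derive_sum _ _ _ nz (fun k t => E j k * wk k t) u 1 _
        (fun k => derM (derC (E j k) u) (wf_der (y0 k 0) (zt k 0) (xt k 0) (apos k) (pos u k hu') (pos l0 k (lexx _)))).
      have := is_deriveB d1 d2.
      move=> d3; eapply derE; first exact: d3.
      move: (hu) => /andP [hu2 _].
      rewrite KEY ?ltW //; apply/eqP; rewrite mxE subr_eq0; apply/eqP; apply: eq_bigr => k _.
      by rewrite mulr0 addr0 Gi Y1.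
    move=> u; apply: continuousB; first exact: xc.
    apply: cont_sum => k w; apply: continuousM; first exact: cst_continuous.
    exact: within_wf.
  rewrite /psi => /eqP; rewrite subr_eq => /eqP ->.
  rewrite [\sum_k E j k * wk k l0]big1 ?subr0 //.
  by move=> k _; rewrite /wk (wf_l0 _ _ _ (apos k) (pos l0 k (lexx _))) mulr0.
split.
  apply/matrixP => j k; rewrite (ord1 k) X1.
  have -> : (1%:M + E *m Omega *m Ft) *m x l0 + E *m c = x l0 + E *m (Omega *m y0 + c).
    by rewrite mulmxDl mul1mx mulmxDr -addrA !mulmxA.
  rewrite [RHS]mxE [(E *m _) j 0]mxE; congr (_ + _); apply: eq_bigr => k' _; congr (_ * _).
  rewrite mxE diag_entry /c [(\row_i _) 0 k']mxE [(\col_i _) k' 0]mxE /wk wf_l1; [by [] | exact: apos | exact: pos | exact: pos (ltW l01)].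
pose beta : 'rV[R]_nz := \row_k Rintegral lebesgue_measure `[l0, l1] (mm (alpha 0 k)).
have cmm k : {within `[l0, l1], continuous (mm (alpha 0 k))}.
  apply: derivable_within_continuous => u; rewrite in_itv /= => /andP [hu _].
  exact: der_mm (pos u k hu).
have IntE : mxRintegral (Amat P Rm H) l0 l1 = E *m diag_mx beta *m Ft.
  apply/matrixP => i j; rewrite mxE EDF_entry.
  transitivity (Rintegral lebesgue_measure `[l0, l1]
      (fun t => \sum_k E i k * mm (alpha 0 k) t * Ft k j)).
    apply: eq_Rintegral => t; rewrite inE /= in_itv /= => /andP [ht _].
    by rewrite AmatE // EDF_entry; apply: eq_bigr => k _; rewrite [(\row_i0 _) 0 k]mxE.
  rewrite Rint_sum; last 2 first.
  - exact: ltW.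
  - move=> k.
    have ck : {within `[l0, l1], continuous (fun t : R => E i k * mm (alpha 0 k) t * Ft k j)}.
      move=> u; apply: (@continuousM R (subspace `[l0, l1]) (fun t => E i k * mm (alpha 0 k) t) (fun _ => Ft k j)); last exact: cst_continuous.
      apply: continuousM; first exact: cst_continuous.
      exact: cmm.
    exact: ck.
  by apply: eq_bigr => k _; rewrite RintZZ ?mxE.
rewrite IntE (expm_EDF _ FE); last by move=> k; rewrite lt0r_neq0.
congr (_ + _ *m _ *m _); congr diag_mx; apply/matrixP => i k; rewrite !mxE.
by rewrite integ_mm // exp_beta // ltW.
Qed.
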